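(* Let $n\ge1$ and $N\ge n$. (i) For every integer $c$ with $0\le c\le\lfloor n/2\rfloor$, the dimension of the space of $S_n$-invariant homogeneous polynomials of degree $c$ on $\mathbb R^{n\times n}$ equals the dimension of the space of $S_N$-invariant homogeneous polynomials of degree $c$ on $\mathbb R^{N\times N}$. (ii) For every integer $c$ with $0\le c\le\lfloor n/2\rfloor-1$, the dimension of the space of $S_n$-equivariant polynomial maps $\mathbb R^{n\times n}\to\mathbb R^{n\times n}$ with homogeneous components of degree $c$ equals the corresponding dimension for $S_N$ acting on $\mathbb R^{N\times N}$.
   Context: $S_n$ acts on $\mathbb R^{n\times n}$ by $(g\cdot X)_{ij}=X_{g^{-1}(i),g^{-1}(j)}$. A polynomial $p$ is invariant if $p(g\cdot X)=p(X)$ for all $g$; a polynomial map $P$ is equivariant if $P(g\cdot X)=g\cdot P(X)$ for all $g$. *)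

(* Defs.v *)
From mathcomp Require Import all_boot all_order all_algebra all_fingroup.
From mathcomp Require Import mpoly.
From mathcomp Require Import reals.
Set Implicit Arguments. Unset Strict Implicit. Unset Printing Implicit Defensive.
Import GRing.Theory.
Local Open Scope ring_scope.

(* Variables of a polynomial on n x n matrices: one variable X_(i,j) per entry,
   indexed by the finite type 'I_n * 'I_n (through enum_rank). *)
Definition nvar (n : nat) : nat := #|{: 'I_n * 'I_n}|.
Definition var_of (n : nat) (i j : 'I_n) : 'I_(nvar n) := enum_rank (i, j).

Definition matpoly (R : realType) (n : nat) := {mpoly R[nvar n]}.

(* The substitution X_(i,j) |-> X_(g^-1 i, g^-1 j): for a polynomial p,
   act_poly g p is the polynomial X |-> p (g . X), where
   (g . X)_(i,j) = X_(g^-1 i, g^-1 j). *)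
Definition subst_tuple (R : realType) (n : nat) (g : 'S_n) :
  (nvar n).-tuple {mpoly R[nvar n]} :=
  [tuple 'X_(let ij := enum_val k in var_of (g^-1 ij.1)%g (g^-1 ij.2)%g)
   | k < nvar n].
Definition act_poly (R : realType) (n : nat) (g : 'S_n) (p : matpoly R n)
  : matpoly R n := p \mPo subst_tuple R g.

Definition inv_hom (R : realType) (n c : nat) (p : matpoly R n) : Prop :=
  p \is c.-homog /\ forall g : 'S_n, act_poly g p = p.

Definition polymap (R : realType) (n : nat) := {ffun 'I_n * 'I_n -> matpoly R n}.

(* S_n-equivariant polynomial maps whose components are homogeneous of degree c:
   P (g . X) = g . P(X), i.e. P_(i,j)(g . X) = P_(g^-1 i, g^-1 j)(X). *)
Definition equiv_hom (R : realType) (n c : nat) (P : polymap R n) : Prop :=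
  (forall ij, P ij \is c.-homog) /\
  forall (g : 'S_n) (i j : 'I_n), act_poly g (P (i, j)) = P ((g^-1 i)%g, (g^-1 j)%g).

Definition has_dim (R : realType) (V : lmodType R) (S : V -> Prop) (d : nat) : Prop :=
  exists b : 'I_d -> V,
    [/\ forall i, S (b i),
        (forall a : 'I_d -> R, \sum_(i < d) a i *: b i = 0 -> forall i, a i = 0) &
        (forall v, S v -> exists a : 'I_d -> R, v = \sum_(i < d) a i *: b i)].

(* Main.v *)
Require Import Defs.
From mathcomp Require Import all_boot all_order all_algebra all_fingroup.
From mathcomp Require Import mpoly.
From mathcomp Require Import reals.
Set Implicit Arguments. Unset Strict Implicit. Unset Printing Implicit Defensive.
Import GRing.Theory.

Local Open Scope ring_scope.

Definition mat n (m : 'X_{1..nvar n}) (i j : 'I_n) : nat := m (var_of i j).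
Definition mk n (F : 'I_n -> 'I_n -> nat) : 'X_{1..nvar n} :=
  [multinom F (enum_val k).1 (enum_val k).2 | k < nvar n].

Lemma matE n F i j : mat (@mk n F) i j = F i j.
Proof. by rewrite /mat /mk mnmE /var_of enum_rankK. Qed.

Lemma mat_inj n (m m' : 'X_{1..nvar n}) :
  (forall i j, mat m i j = mat m' i j) -> m = m'.
Proof.
move=> H; apply/mnmP=> k; have := H (enum_val k).1 (enum_val k).2.
by rewrite /mat /var_of -surjective_pairing enum_valK.
Qed.

Definition sigf n (g : 'S_n) (k : 'I_(nvar n)) : 'I_(nvar n) :=
  var_of (g^-1 (enum_val k).1)%g (g^-1 (enum_val k).2)%g.

Lemma sigf_inj n (g : 'S_n) : injective (sigf g).
Proof.
move=> k k'; rewrite /sigf /var_of => /enum_rank_inj [] /perm_inj H1 /perm_inj H2.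
by apply: enum_val_inj; rewrite [enum_val k]surjective_pairing H1 H2 -surjective_pairing.
Qed.

Definition sigp n (g : 'S_n) : 'S_(nvar n) := perm (@sigf_inj n g).

Definition push n (g : 'S_n) (m : 'X_{1..nvar n}) : 'X_{1..nvar n} :=
  [multinom m (sigp g i) | i < nvar n].

Lemma act_msym (R : realType) n (g : 'S_n) (p : matpoly R n) :
  act_poly g p = msym (sigp g) p.
Proof.
rewrite -[msym _ p]comp_mpoly_id msym_mPo /act_poly; congr (_ \mPo _).
apply: eq_from_tnth => k; rewrite !tnth_map !tnth_ord_tuple permE.
by [].
Qed.

Lemma mcoeff_act (R : realType) n (g : 'S_n) (p : matpoly R n) m :
  (act_poly g p)@_m = p@_(push g m).
Proof. by rewrite act_msym mcoeff_sym. Qed.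

Lemma mat_push n (g : 'S_n) m i j :
  mat (push g m) i j = mat m (g^-1 i)%g (g^-1 j)%g.
Proof. by rewrite /mat /push mnmE permE /sigf /var_of enum_rankK. Qed.

Lemma mdeg_push n (g : 'S_n) m : mdeg (push g m) = mdeg m.
Proof. exact: mdeg_mperm. Qed.

Lemma pushM n (g h : 'S_n) m : push h (push g m) = push (g * h)%g m.
Proof.
by apply: mat_inj => i j; rewrite !mat_push invMg !permM.
Qed.

Lemma push1 n m : push (1%g : 'S_n) m = m.
Proof. by apply: mat_inj => i j; rewrite !mat_push invg1 !perm1. Qed.

Lemma mdeg_mat n (m : 'X_{1..nvar n}) :
  mdeg m = (\sum_(i : 'I_n) \sum_(j : 'I_n) mat m i j)%N.
Proof.
rewrite mdegE pair_bigA /=.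
rewrite (reindex (fun ij : 'I_n * 'I_n => enum_rank ij)) /=; last first.
  by exists enum_val => x _; [rewrite enum_rankK | rewrite enum_valK].
by apply: eq_bigr => -[i j] _.
Qed.

Local Open Scope ring_scope.

Lemma perm_ext (T : finType) (s : seq T) (f : T -> T) :
  {in s &, injective f} -> exists p : {perm T}, {in s, forall x, p x = f x}.
Proof.
elim: s => [|a s IH] Hinj; first by exists 1%g.
have [|p Hp] := IH; first by move=> x y xs ys; apply: Hinj; rewrite inE ?xs ?ys orbT.
case: (boolP (a \in s)) => [as_|nas].
  by exists p => x; rewrite inE => /orP [/eqP ->|]; [exact: Hp | exact: Hp].
exists (p * tperm (p a) (f a))%g => x; rewrite inE permM.
case/orP => [/eqP ->|xs]; first by rewrite tpermL.
have xa : x != a by apply/negP => /eqP Ex; move: nas; rewrite -Ex xs.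
rewrite (Hp x xs) tpermD //.
  by rewrite -(Hp x xs) (inj_eq perm_inj) eq_sym.
apply/negP => /eqP /Hinj; rewrite !inE eqxx xs orbT => /(_ isT isT) Ex.
by move: xa; rewrite Ex eqxx.
Qed.

Lemma has_dim_classes (R : realType) (V : lmodType R) (S : V -> Prop)
  (T K : finType) (build : (T -> R) -> V) (cl : T -> K) :
  (forall f g, f =1 g -> build f = build g) ->
  (forall (d : nat) (a : 'I_d -> R) (F : 'I_d -> T -> R),
      build (fun t => \sum_(i < d) a i * F i t) = \sum_(i < d) a i *: build (F i)) ->
  (forall f, build f = 0 -> forall t, f t = 0) ->
  (forall v, S v <-> exists f, v = build f /\ forall t t', cl t = cl t' -> f t = f t') ->
  has_dim S #|[set cl t | t in T]|.
Proof.
move=> Hext Hlin Hinj HS.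
set I := [set cl t | t in T].
have clI t : cl t \in I by apply: imset_f.
have ind_sum (a : 'I_#|I| -> R) t :
    \sum_(k < #|I|) a k * (cl t == enum_val k)%:R = a (enum_rank_in (clI t) (cl t)).
  rewrite (bigD1 (enum_rank_in (clI t) (cl t))) //=.
  rewrite enum_rankK_in ?imset_f // eqxx mulr1 big1 ?addr0 // => k Hk.
  case: eqP => [E|]; last by rewrite mulr0.
  by case/negP: Hk; apply/eqP/enum_val_inj; rewrite enum_rankK_in // E.
exists (fun k => build (fun t => (cl t == enum_val k)%:R)); split.
- move=> k; apply/HS; exists (fun t => (cl t == enum_val k)%:R); split => //.
  by move=> t t' ->.
- move=> a Ha k.
  have := Hinj _ (etrans (Hlin _ a _) Ha).
  have : enum_val k \in I by exact: enum_valP.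
  case/imsetP => t _ Ek => /(_ t); rewrite ind_sum.
  suff -> : enum_rank_in (clI t) (cl t) = k by [].
  by apply/enum_val_inj; rewrite enum_rankK_in // Ek.
- move=> v /HS [f [-> Hf]].
  exists (fun k => if [pick t | cl t == enum_val k] is Some t then f t else 0).
  rewrite -Hlin; apply: Hext => t; rewrite ind_sum.
  case: pickP => [t' /eqP Et'|H].
    by apply: Hf; rewrite Et' enum_rankK_in ?imset_f.
  by move: (H t); rewrite enum_rankK_in ?imset_f // eqxx.
Qed.

Local Open Scope ring_scope.

Definition Tn (n c : nat) : finType := {m : bmultinom (nvar n) c.+1 | mdeg m == c}.
Definition rawT n c (t : Tn n c) : 'X_{1..nvar n} := bmnm (val t).

Lemma rawT_inj n c : injective (@rawT n c).
Proof. by move=> t t' E; apply/val_inj/val_inj. Qed.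

Lemma rawT_deg n c (t : Tn n c) : mdeg (rawT t) = c.
Proof. exact/eqP/(valP t). Qed.

Definition mkT n c (m : 'X_{1..nvar n}) (H : mdeg m = c) : Tn n c :=
  exist _ (@BMultinom _ c.+1 m (eq_ind_r (fun x => (x < c.+1)%N) (ltnSn c) H))
     (introT eqP H).

Lemma rawT_mkT n c m (H : mdeg m = c) : rawT (@mkT n c m H) = m.
Proof. by []. Qed.

Definition build (R : realType) n c (f : Tn n c -> R) : matpoly R n :=
  \sum_(t : Tn n c) f t *: 'X_[rawT t].

Section Build.
Variables (R : realType) (n c : nat).
Implicit Types f : Tn n c -> R.

Lemma build_coef f t : (build f)@_(rawT t) = f t.
Proof.
rewrite /build raddf_sum (bigD1 t) //= mcoeffZ mcoeffX eqxx mulr1 big1 ?addr0 //.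
move=> t' Ht'; rewrite mcoeffZ mcoeffX.
by case: eqP => [/rawT_inj E|]; [by rewrite E eqxx in Ht' | rewrite mulr0].
Qed.

Lemma build_coef0 f m : mdeg m != c -> (build f)@_m = 0.
Proof.
move=> Hm; rewrite /build raddf_sum big1 // => t _.
rewrite /= mcoeffZ mcoeffX; case: eqP => [E|]; last by rewrite mulr0.
by move: Hm; rewrite -E rawT_deg eqxx.
Qed.

Lemma build_homog f : build f \is c.-homog.
Proof.
rewrite /build; apply: rpred_sum => t _; apply: rpredZ.
rewrite dhomogX.
exact/eqP/rawT_deg.
Qed.

Lemma build_ext f g : f =1 g -> build f = build g.
Proof. by move=> E; apply: eq_bigr => t _; rewrite E. Qed.

Lemma build_lin (d : nat) (a : 'I_d -> R) (F : 'I_d -> Tn n c -> R) :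
  build (fun t => \sum_(i < d) a i * F i t) = \sum_(i < d) a i *: build (F i).
Proof.
rewrite /build; under eq_bigr do rewrite scaler_suml.
rewrite exchange_big /=; apply: eq_bigr => i _.
by rewrite scaler_sumr; apply: eq_bigr => t _; rewrite scalerA.
Qed.

Lemma build_inj f : build f = 0 -> forall t, f t = 0.
Proof. by move=> E t; rewrite -build_coef E mcoeff0. Qed.

Lemma homog_build (v : matpoly R n) : v \is c.-homog ->
  v = build (fun t : Tn n c => v@_(rawT t)).
Proof.
move=> Hv; apply/mpolyP => m.
case: (mdeg m =P c) => [E|/eqP E].
  by rewrite -(rawT_mkT E) build_coef.
by rewrite build_coef0 // (dhomog_nemf_coeff Hv).
Qed.
End Build.

Lemma has_dim_inv (R : realType) n c (K : finType) (cl : Tn n c -> K) :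
  (forall t t', cl t = cl t' <-> exists g : 'S_n, rawT t' = push g (rawT t)) ->
  has_dim (@inv_hom R n c) #|[set cl t | t in Tn n c]|.
Proof.
move=> Hcl.
apply: has_dim_classes (@build_ext R n c) (@build_lin R n c) (@build_inj R n c) _.
move=> v; split.
- case=> Hh Hinv; exists (fun t => v@_(rawT t)); split; first exact: homog_build.
  by move=> t t' /Hcl [g ->]; rewrite -mcoeff_act Hinv.
- case=> f [-> Hf]; split; first exact: build_homog.
  move=> g; apply/mpolyP => m; rewrite mcoeff_act.
  case: (mdeg m =P c) => [E|/eqP E].
  + have E' : mdeg (push g m) = c by rewrite mdeg_push.
    have -> : (build f)@_(push g m) = f (mkT E') by rewrite -build_coef rawT_mkT.
    have -> : (build f)@_m = f (mkT E) by rewrite -build_coef rawT_mkT.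
    by symmetry; apply: Hf; apply/Hcl; exists g; rewrite !rawT_mkT.
  + by rewrite !build_coef0 // mdeg_push.
Qed.

Definition T2 (n c : nat) : finType := (('I_n * 'I_n) * Tn n c)%type.

Definition build2 (R : realType) n c (F : T2 n c -> R) : polymap R n :=
  [ffun ij => build (fun t => F (ij, t))].

Lemma has_dim_equiv (R : realType) n c (K : finType)
   (cl : T2 n c -> K) :
  (forall x x', cl x = cl x' <-> exists g : 'S_n,
      x'.1 = (g x.1.1, g x.1.2) /\ rawT x'.2 = push g (rawT x.2)) ->
  has_dim (@equiv_hom R n c) #|[set cl t | t in T2 n c]|.
Proof.
move=> Hcl.
apply: (@has_dim_classes R (polymap R n) _ _ _ (@build2 R n c)) => //.
- by move=> f g E; apply/ffunP => ij; rewrite !ffunE; apply: build_ext => t; rewrite E.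
- move=> d a F; apply/ffunP => ij; rewrite sum_ffunE !ffunE build_lin.
  by apply: eq_bigr => i _; rewrite !ffunE.
- move=> f /ffunP E [ij t]; move: (E ij); rewrite !ffunE => /build_inj; apply.
move=> P; split.
- case=> Hh Hinv; exists (fun x => (P x.1)@_(rawT x.2)); split.
    by apply/ffunP => ij; rewrite ffunE; apply: homog_build.
  move=> [a t] [a' t'] /Hcl [g /= [-> ->]].
  by rewrite -mcoeff_act Hinv !permK -surjective_pairing.
- case=> f [-> Hf]; split; first by move=> ij; rewrite ffunE; apply: build_homog.
  move=> g i j; rewrite !ffunE; apply/mpolyP => m; rewrite mcoeff_act.
  case: (mdeg m =P c) => [E|/eqP E].
  + have E' : mdeg (push g m) = c by rewrite mdeg_push.
    have -> : (build (fun t => f (i, j, t)))@_(push g m) = f ((i, j), mkT E')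
      by rewrite -(build_coef (fun t => f (i, j, t))) rawT_mkT.
    have -> : (build (fun t => f ((g^-1 i)%g, (g^-1 j)%g, t)))@_m
        = f (((g^-1 i)%g, (g^-1 j)%g), mkT E)
      by rewrite -(build_coef (fun t => f ((g^-1 i)%g, (g^-1 j)%g, t))) rawT_mkT.
    by symmetry; apply: Hf; apply/Hcl; exists g; rewrite !rawT_mkT /= !permKV.
  + by rewrite !build_coef0 // mdeg_push.
Qed.

Local Close Scope ring_scope.

Definition rconf n := (option ('I_n * 'I_n) * 'X_{1..nvar n})%type.
Definition cact n (g : 'S_n) (r : rconf n) : rconf n :=
  (omap (fun p => (g p.1, g p.2)) r.1, push g r.2).

Lemma cactM n (g h : 'S_n) r : cact h (cact g r) = cact (g * h)%g r.
Proof.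
case: r => [[[a b]|] m]; rewrite /cact /= pushM //.
by rewrite !permM.
Qed.

Lemma cact1 n r : cact (1%g : 'S_n) r = r.
Proof. by case: r => [[[a b]|] m]; rewrite /cact /= push1 ?perm1. Qed.

Definition C n c : finType := (option ('I_n * 'I_n) * Tn n c)%type.
Definition rawC n c (x : C n c) : rconf n := (x.1, rawT x.2).

Definition cln n c (x : C n c) : {set C n c} :=
  [set z | [exists g : 'S_n, cact g (rawC x) == rawC z]].

Lemma cln_eq n c (x x' : C n c) :
  cln x = cln x' <-> exists g : 'S_n, rawC x' = cact g (rawC x).
Proof.
split.
  move=> E; have : x' \in cln x' by rewrite inE; apply/existsP; exists 1%g; rewrite cact1.
  by rewrite -E inE => /existsP [g /eqP <-]; exists g.
move=> [g Eg]; apply/setP => z; rewrite !inE; apply/existsP/existsP => -[h /eqP E].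
  by exists (g^-1 * h)%g; rewrite Eg cactM mulgA mulgV mul1g E.
by exists (g * h)%g; rewrite -cactM -Eg E.
Qed.

Local Close Scope ring_scope.

Section Cross.
Variables (n N : nat) (le : (n <= N)%N).
Local Notation w := (widen_ord le).

Definition iotam (m : 'X_{1..nvar n}) : 'X_{1..nvar N} :=
  mk (fun I J => \sum_(i : 'I_n | w i == I) \sum_(j : 'I_n | w j == J) mat m i j)%N.

Definition iotac (r : rconf n) : rconf N :=
  (omap (fun p => (w p.1, w p.2)) r.1, iotam r.2).

Lemma w_inj : injective w.
Proof. by move=> i j E; apply/val_inj; exact: (congr1 val E). Qed.

Lemma sum_w1 (I : 'I_N) (i : 'I_n) (F : 'I_n -> nat) :
  I = w i -> (\sum_(k : 'I_n | w k == I) F k)%N = F i.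
Proof.
move=> ->; rewrite (big_pred1 i) // => k /=; exact: (inj_eq w_inj).

Qed.

Lemma sum_w0 (I : 'I_N) (F : 'I_n -> nat) :
  (n <= I)%N -> (\sum_(k : 'I_n | w k == I) F k)%N = 0%N.
Proof.
move=> HI; rewrite big_pred0 // => k; apply/eqP => E.
by move: (ltn_ord k) HI; rewrite -E /= => /leq_trans H /H; rewrite ltnn.
Qed.

Lemma w_cases (I : 'I_N) : (exists i, I = w i) \/ (n <= I)%N.
Proof.
case: (ltnP I n) => [H|]; last by right.
by left; exists (Ordinal H); apply/val_inj.
Qed.

Lemma mat_iota m i j : mat (iotam m) (w i) (w j) = mat m i j.
Proof. by rewrite matE (sum_w1 _ (erefl _)) (sum_w1 _ (erefl _)). Qed.

Lemma mat_iota0 m (I J : 'I_N) : ((n <= I) || (n <= J))%N -> mat (iotam m) I J = 0%N.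
Proof.
rewrite matE => /orP [H|H]; first by rewrite sum_w0.
by rewrite big1 // => i _; rewrite sum_w0.
Qed.

Lemma mat_iota_nz m (I J : 'I_N) : mat (iotam m) I J != 0%N -> (I < n)%N && (J < n)%N.
Proof.
by apply: contraR; rewrite negb_and -!leqNgt => /mat_iota0 ->.
Qed.

Lemma sum_w (F : 'I_n -> nat) :
  (\sum_(I : 'I_N) \sum_(i : 'I_n | w i == I) F i)%N = (\sum_i F i)%N.
Proof.
rewrite (exchange_big_dep xpredT) //=; apply: eq_bigr => i _.
rewrite (big_pred1 (w i)) // => I /=; exact: eq_sym.
Qed.

Lemma mdeg_iota m : mdeg (iotam m) = mdeg m.
Proof.
rewrite !mdeg_mat; under eq_bigr do under eq_bigr do rewrite matE.
under eq_bigr do rewrite exchange_big /=.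
rewrite sum_w; apply: eq_bigr => i _; exact: sum_w.
Qed.

Lemma lift_perm_ex (g : 'S_n) : exists h : 'S_N, forall i, h (w i) = w (g i).
Proof.
pose f (I : 'I_N) := if insub (val I) is Some i then w (g i) else I.
have fw i : f (w i) = w (g i) by rewrite /f /= valK.
have [|h Hh] := @perm_ext _ [seq w i | i <- enum 'I_n] f.
  move=> I J /mapP [i _ ->] /mapP [j _ ->]; rewrite !fw.
  by move/w_inj/perm_inj ->.
by exists h => i; rewrite Hh ?fw //; apply: map_f; rewrite mem_enum.
Qed.

Lemma iotac_cact (g : 'S_n) (h : 'S_N) r :
  (forall i, h (w i) = w (g i)) -> iotac (cact g r) = cact h (iotac r).
Proof.
move=> Hh.
have Hhi i : (h^-1 (w i))%g = w (g^-1 i)%g.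
  by apply: (@perm_inj _ h); rewrite permKV Hh permKV.
case: r => a m; rewrite /iotac /cact /=; congr (_, _).
  by case: a => [[p q]|] //=; rewrite !Hh.
apply: mat_inj => I J; rewrite mat_push.
have nI (K : 'I_N) : (n <= K)%N -> (n <= h^-1 K)%g%N.
  move=> HK; case: (w_cases (h^-1 K)%g) => // -[k Ek].
  by move: HK; rewrite -(permKV h K) Ek Hh /= leqNgt ltn_ord.
case: (w_cases I) => [[i ->]|HI]; last by rewrite mat_iota0 ?HI // mat_iota0 // nI.
case: (w_cases J) => [[j ->]|HJ]; last by rewrite mat_iota0 ?HJ ?orbT // mat_iota0 // (nI J HJ) orbT.
by rewrite !Hhi !mat_iota mat_push.
Qed.

Lemma lift_iota (g : 'S_n) : exists h : 'S_N, forall r, iotac (cact g r) = cact h (iotac r).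
Proof.
by have [h Hh] := lift_perm_ex g; exists h => r; apply: iotac_cact.
Qed.

Lemma ext_iota (h : 'S_N) r r' :
  cact h (iotac r) = iotac r' -> exists g : 'S_n, cact g r = r'.
Proof.
case: r r' => [a m] [a' m'] /pair_equal_spec [/= Ea Em].
have Hm I J : mat (iotam m') I J = mat (iotam m) (h^-1 I)%g (h^-1 J)%g.
  by rewrite -Em mat_push.
pose f (i : 'I_n) := if insub (val (h (w i))) is Some k then k else i.
have fA i : (h (w i) < n)%N -> w (f i) = h (w i).
  by move=> Hi; rewrite /f insubT /=; apply/val_inj.
have [|g Hg0] := @perm_ext _ [seq i <- enum 'I_n | (h (w i) < n)%N] f.
  move=> i j; rewrite !mem_filter => /andP [Hi _] /andP [Hj _] E.
  by apply/w_inj/(@perm_inj _ h); rewrite -fA // -fA // E.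
have Hg i : (h (w i) < n)%N -> w (g i) = h (w i).
  by move=> Hi; rewrite Hg0 ?fA // mem_filter Hi mem_enum.
have back i : (h^-1 (w (g i)) < n)%g%N -> (h (w i) < n)%N.
  move=> H; case: (w_cases (h^-1 (w (g i)))%g) => [[k Ek]|]; last by rewrite leqNgt H.
  have Hk : (h (w k) < n)%N by rewrite -Ek permKV /=.
  have := Hg k Hk; rewrite -Ek permKV => /w_inj /perm_inj <-. by [].
exists g; congr (_, _).
  case: a a' Ea => [[p q]|] [[p' q']|] //= [E1 E2].
  have Hp : (h (w p) < n)%N by rewrite E1 /=.
  have Hq : (h (w q) < n)%N by rewrite E2 /=.
  by rewrite (w_inj (etrans (Hg _ Hp) E1)) (w_inj (etrans (Hg _ Hq) E2)).
suff H i j : mat m' (g i) (g j) = mat m i j.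
  by apply: mat_inj => a0 b0; rewrite mat_push -H !permKV.
have c1 : mat m i j != 0%N -> (h (w i) < n)%N && (h (w j) < n)%N.
  by rewrite -mat_iota; have := Hm (h (w i)) (h (w j)); rewrite !permK => <- /mat_iota_nz.
have c2 : mat m' (g i) (g j) != 0%N -> (h (w i) < n)%N && (h (w j) < n)%N.
  by rewrite -mat_iota Hm => /mat_iota_nz /andP [/back -> /back ->].
case: (boolP ((h (w i) < n)%N && (h (w j) < n)%N)) => [/andP [Hi Hj]|Hn].
  by rewrite -mat_iota Hg // Hg // Hm !permK mat_iota.
move: c1 c2; rewrite (negbTE Hn).
case: (mat m i j =P 0%N) => [-> _|_ /(_ isT) //].
by case: (mat m' (g i) (g j) =P 0%N) => [-> //|_ /(_ isT)].
Qed.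
End Cross.

Local Close Scope ring_scope.

Lemma cardU_le (T : finType) (A B : {set T}) : (#|A :|: B| <= #|A| + #|B|)%N.
Proof. by rewrite cardsU leq_subr. Qed.

Definition suppm N (M : 'X_{1..nvar N}) : {set 'I_N} :=
  [set I | [exists J, (mat M I J != 0%N) || (mat M J I != 0%N)]].
Definition suppa N (a : option ('I_N * 'I_N)) : {set 'I_N} :=
  if a is Some p then [set p.1; p.2] else set0.

Lemma card_suppm N (M : 'X_{1..nvar N}) : (#|suppm M| <= 2 * mdeg M)%N.
Proof.
set P := [set ij : 'I_N * 'I_N | mat M ij.1 ij.2 != 0%N].
have sub : suppm M \subset [set ij.1 | ij in P] :|: [set ij.2 | ij in P].
  apply/subsetP => I; rewrite inE => /existsP [J /orP [H|H]]; rewrite inE.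
    by apply/orP; left; apply/imsetP; exists (I, J); rewrite // inE.
  by apply/orP; right; apply/imsetP; exists (J, I); rewrite // inE.
apply: leq_trans (subset_leq_card sub) _.
apply: leq_trans (cardU_le _ _) _.
have cP : (#|P| <= mdeg M)%N.
  rewrite mdeg_mat pair_bigA /= -sum1_card big_mkcond /=.
  apply: leq_sum => -[i j] _; rewrite inE /=.
  by case: (mat M i j) => [|k].
rewrite mul2n -addnn leq_add //; exact: leq_trans (leq_imset_card _ _) cP.
Qed.

Lemma card_suppa N (a : option ('I_N * 'I_N)) :
  (#|suppa a| <= (if a is Some _ then 2 else 0))%N.
Proof. by case: a => [[p q]|] /=; rewrite ?cards2 ?cards0 //; case: (p != q). Qed.

Lemma move_into_block n N (le : (n <= N)%N) (A : {set 'I_N}) :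
  (#|A| <= n)%N -> exists s : 'S_N, forall I, I \in A -> (s I < n)%N.
Proof.
move=> HA.
have idx I : I \in A -> (index I (enum A) < #|A|)%N.
  by move=> HI; rewrite cardE index_mem mem_enum.
pose f (I : 'I_N) := insubd I (index I (enum A)) : 'I_N.
have fv I : I \in A -> val (f I) = index I (enum A).
  move=> HI; rewrite val_insubd; case: ifP => // /negP []; apply: leq_trans le.
  exact: leq_trans (idx I HI) HA.
have [|s Hs] := @perm_ext _ (enum A) f.
  move=> I J; rewrite !mem_enum => HI HJ E.
  have := congr1 val E; rewrite fv // fv // => E'.
  have eI := nth_index I (x:=I) (s:=enum A); have eJ := nth_index I (x:=J) (s:=enum A).
  rewrite !mem_enum in eI eJ.
  by rewrite -(eI HI) -(eJ HJ) E'.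
exists s => I HI; rewrite Hs ?mem_enum // fv //.
exact: leq_trans (idx I HI) HA.
Qed.

Lemma move_conf n N (le : (n <= N)%N) c (y : C N c) :
  (2 * c + (if y.1 is Some _ then 2 else 0) <= n)%N ->
  exists (h : 'S_N) (x : C n c), cact h (rawC y) = iotac le (rawC x).
Proof.
case: y => [a t] /= Hy; set M := rawT t.
have [|s Hs] := move_into_block le (A := suppm M :|: suppa a).
  apply: leq_trans (cardU_le _ _) _; apply: leq_trans Hy.
  by apply: leq_add; [rewrite -(rawT_deg t); exact: card_suppm | exact: card_suppa].
have Bm I J : mat (push s M) I J != 0%N -> (I < n)%N && (J < n)%N.
  rewrite mat_push => H.
  rewrite -(permKV s I) -(permKV s J) !Hs // inE; apply/orP; left; rewrite inE;
    apply/existsP.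
    by exists (s^-1 I)%g; rewrite H orbT.
  by exists (s^-1 J)%g; rewrite H.
pose rM := mk (fun i j => mat (push s M) (widen_ord le i) (widen_ord le j)).
have iM : iotam le rM = push s M.
  apply: mat_inj => I J.
  case: (w_cases le I) => [[i ->]|HI].
    case: (w_cases le J) => [[j ->]|HJ]; first by rewrite mat_iota matE.
    rewrite mat_iota0 ?HJ ?orbT //.
    by case: (mat (push s M) (widen_ord le i) J =P 0%N) => [->//|/eqP /Bm /andP [_]]; rewrite ltnNge HJ.
  rewrite mat_iota0 ?HI //.
  by case: (mat (push s M) I J =P 0%N) => [->//|/eqP /Bm /andP []]; rewrite ltnNge HI.
have dM : mdeg rM = c by rewrite -(mdeg_iota le) iM mdeg_push rawT_deg.
exists s; case: a Hy Hs => [[p q]|] Hy Hs.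
  have Hp : (s p < n)%N by apply: Hs; rewrite !inE eqxx orbT.
  have Hq : (s q < n)%N by apply: Hs; rewrite !inE eqxx !orbT.
  exists (Some (Ordinal Hp, Ordinal Hq), mkT dM).
  rewrite /cact /iotac /rawC /= rawT_mkT iM; congr (Some (_, _), _); exact: val_inj.
by exists (None, mkT dM); rewrite /cact /iotac /rawC /= rawT_mkT iM.
Qed.

Local Close Scope ring_scope.

Section Classes.
Variables (n N : nat) (le : (n <= N)%N) (c : nat).

Definition clN (y : C N c) : {set C n c} :=
  [set z | [exists h : 'S_N, cact h (rawC y) == iotac le (rawC z)]].

Lemma clN_char Y (x : C n c) (h0 : 'S_N) :
  cact h0 Y = iotac le (rawC x) -> forall z : C n c,
  (exists h : 'S_N, cact h Y = iotac le (rawC z)) <->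
  (exists g : 'S_n, cact g (rawC x) = rawC z).
Proof.
move=> E0 z; split.
  move=> [h Eh]; apply: (@ext_iota _ _ le (h0^-1 * h)%g).
  by rewrite -E0 cactM mulgA mulgV mul1g.
move=> [g Eg]; have [k Hk] := lift_iota le g.
by exists (h0 * k)%g; rewrite -cactM E0 -Hk Eg.
Qed.

Lemma clN_cln (y : C N c) (x : C n c) (h0 : 'S_N) :
  cact h0 (rawC y) = iotac le (rawC x) -> clN y = cln x.
Proof.
move=> E0; apply/setP => z; rewrite !inE.
apply/existsP/existsP => [[h /eqP Eh]|[g /eqP Eg]].
  by have [g Eg] := (clN_char E0 z).1 (ex_intro _ h Eh); exists g; apply/eqP.
by have [h Eh] := (clN_char E0 z).2 (ex_intro _ g Eg); exists h; apply/eqP.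
Qed.

Lemma isSome_omap A B (f : A -> B) o : isSome (omap f o) = isSome o.
Proof. by case: o. Qed.

Lemma clN_ex (y : C N c) :
  (2 * c + (if y.1 is Some _ then 2 else 0) <= n)%N ->
  exists x : C n c, clN y = cln x /\ isSome x.1 = isSome y.1.
Proof.
move=> Hy; have [h [x Ex]] := move_conf le Hy.
exists x; split; first exact: clN_cln Ex.
by have := congr1 (fun r => isSome r.1) Ex; rewrite /= !isSome_omap.
Qed.

Lemma clN_eq (y y' : C N c) :
  (2 * c + (if y.1 is Some _ then 2 else 0) <= n)%N ->
  clN y = clN y' <-> exists h : 'S_N, rawC y' = cact h (rawC y).
Proof.
move=> Hy; split.
  have [x [Ex _]] := clN_ex Hy => E.
  have : x \in clN y by rewrite Ex inE; apply/existsP; exists 1%g; rewrite cact1.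
  have : x \in clN y' by rewrite -E Ex inE; apply/existsP; exists 1%g; rewrite cact1.
  rewrite !inE => /existsP [h' /eqP E'] /existsP [h /eqP Eh].
  exists (h * h'^-1)%g; rewrite -cactM Eh -E' cactM mulgV cact1 //.
move=> [h Eh]; apply/setP => z; rewrite !inE; apply/existsP/existsP => -[k /eqP Ek].
  by exists (h^-1 * k)%g; rewrite Eh cactM mulgA mulgV mul1g Ek.
by exists (h * k)%g; rewrite -cactM -Eh Ek.
Qed.

Lemma iota_C (x : C n c) : exists y : C N c, rawC y = iotac le (rawC x).
Proof.
have d : mdeg (iotam le (rawT x.2)) = c by rewrite mdeg_iota rawT_deg.
exists (omap (fun p => (widen_ord le p.1, widen_ord le p.2)) x.1, mkT d).
by [].
Qed.

Lemma clN_iota (x : C n c) : exists y : C N c, rawC y = iotac le (rawC x) /\ clN y = cln x.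
Proof.
have [y Ey] := iota_C x; exists y; split => //.
by apply: (@clN_cln _ _ 1%g); rewrite cact1.
Qed.
End Classes.

Local Open Scope ring_scope.

Lemma part1 (R : realType) n N (le : (n <= N)%N) c : (2 * c <= n)%N ->
  exists d : nat, has_dim (@inv_hom R n c) d /\ has_dim (@inv_hom R N c) d.
Proof.
move=> Hc.
pose cl1 (t : Tn n c) := cln ((None, t) : C n c).
pose cl1N (t : Tn N c) := clN le ((None, t) : C N c).
have Hn t t' : cl1 t = cl1 t' <-> exists g : 'S_n, rawT t' = push g (rawT t).
  rewrite /cl1 cln_eq; split => -[g E]; exists g; first by case: E.
  by rewrite /rawC /cact /= E.
have HN t t' : cl1N t = cl1N t' <-> exists g : 'S_N, rawT t' = push g (rawT t).
  rewrite /cl1N clN_eq ?addn0 //; split => -[g E]; exists g; first by case: E.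
  by rewrite /rawC /cact /= E.
have Eset : [set cl1 t | t in Tn n c] = [set cl1N t | t in Tn N c].
  apply/setP => K; apply/imsetP/imsetP => -[t _ ->].
    have [[a u] [Ey Ecl]] := clN_iota le ((None, t) : C n c).
    case: Ey => /= Ea _; exists u => //; rewrite /cl1N /cl1 -Ecl.
    by rewrite -Ea.
  have [|[a u] [Ex Hs]] := @clN_ex _ _ le c ((None, t) : C N c); first by rewrite addn0.
  exists u => //; rewrite /cl1N /cl1 Ex; case: a Hs {Ex} => //.
exists #|[set cl1 t | t in Tn n c]|; split; first exact: has_dim_inv.
by rewrite Eset; apply: has_dim_inv.
Qed.

Lemma part2 (R : realType) n N (le : (n <= N)%N) c : (2 * c + 2 <= n)%N ->
  exists d : nat, has_dim (@equiv_hom R n c) d /\ has_dim (@equiv_hom R N c) d.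
Proof.
move=> Hc.
pose cl2 (x : T2 n c) := cln ((Some x.1, x.2) : C n c).
pose cl2N (x : T2 N c) := clN le ((Some x.1, x.2) : C N c).
have Hn x x' : cl2 x = cl2 x' <-> exists g : 'S_n,
    x'.1 = (g x.1.1, g x.1.2) /\ rawT x'.2 = push g (rawT x.2).
  rewrite /cl2 cln_eq; split => -[g E]; exists g; first by case: E.
  by case: E => -> E; rewrite /rawC /cact /= E.
have HN x x' : cl2N x = cl2N x' <-> exists g : 'S_N,
    x'.1 = (g x.1.1, g x.1.2) /\ rawT x'.2 = push g (rawT x.2).
  rewrite /cl2N clN_eq //; split => -[g E]; exists g; first by case: E.
  by case: E => -> E; rewrite /rawC /cact /= E.
have Eset : [set cl2 t | t in T2 n c] = [set cl2N t | t in T2 N c].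
  apply/setP => K; apply/imsetP/imsetP => -[t _ ->].
    have [[a u] [Ey Ecl]] := clN_iota le ((Some t.1, t.2) : C n c).
    case: Ey => /= Ea _; move: Ecl; rewrite Ea => Ecl.
    by exists ((widen_ord le t.1.1, widen_ord le t.1.2), u) => //; rewrite /cl2N /cl2 -Ecl.
  have [|[a u] [Ex Hs]] := @clN_ex _ _ le c ((Some t.1, t.2) : C N c); first exact: Hc.
  case: a Hs Ex => // p _ Ex.
  by exists (p, u) => //; rewrite /cl2N /cl2 Ex.
exists #|[set cl2 t | t in T2 n c]|; split; first exact: has_dim_equiv.
by rewrite Eset; apply: has_dim_equiv.
Qed.

Unset Implicit Arguments.
Theorem mainTheorem10 (R : realType) (n N : nat) :
  (1 <= n)%N -> (n <= N)%N ->
  (forall c : nat, (c <= n./2)%N ->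
     exists d : nat, has_dim (@inv_hom R n c) d /\ has_dim (@inv_hom R N c) d) /\
  (forall c : nat, (c.+1 <= n./2)%N ->
     exists d : nat, has_dim (@equiv_hom R n c) d /\ has_dim (@equiv_hom R N c) d).
Proof.
move=> _ le; split => c Hc.
  apply: (part1 R le); rewrite mul2n -geq_half_double //.
apply: (part2 R le); rewrite geq_half_double in Hc.
by move: Hc; rewrite -mul2n mulnSr.
Qed.
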